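(* Let $S$ be a (Hausdorff) topological semigroup such that $S\times S$ is countably compact. Then $S$ does not contain a subsemigroup isomorphic to the semigroup $B_\omega$ of $\omega\times\omega$-matrix units.
   Context: A topological semigroup is a Hausdorff space with a continuous associative multiplication. For a nonzero cardinal $\lambda$, the semigroup of $\lambda\times\lambda$-matrix units is $B_\lambda=(\lambda\times\lambda)\cup\{0\}$ with $(a,b)\cdot(c,d)=(a,d)$ if $b=c$, $(a,b)\cdot(c,d)=0$ if $b\neq c$, and $0$ a zero element. $\omega$ is the first infinite cardinal. *)

(* Defs.v *)
From Stdlib Require Import Arith.

Set Implicit Arguments.

Definition is_topology (X : Type) (opn : (X -> Prop) -> Prop) : Prop :=
  opn (fun _ => True) /\
  (forall U V, opn U -> opn V -> opn (fun x => U x /\ V x)) /\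
  (forall (I : Type) (F : I -> X -> Prop),
      (forall i, opn (F i)) -> opn (fun x => exists i, F i x)).

Definition hausdorff (X : Type) (opn : (X -> Prop) -> Prop) : Prop :=
  forall x y : X, x <> y ->
    exists U V, opn U /\ opn V /\ U x /\ V y /\ (forall z, U z -> V z -> False).

Definition prod_open (X Y : Type) (opX : (X -> Prop) -> Prop)
  (opY : (Y -> Prop) -> Prop) (W : X * Y -> Prop) : Prop :=
  forall p, W p -> exists U V, opX U /\ opY V /\ U (fst p) /\ V (snd p) /\
    (forall x y, U x -> V y -> W (x, y)).

Definition countably_compact (X : Type) (opn : (X -> Prop) -> Prop) : Prop :=
  forall U : nat -> X -> Prop,
    (forall n, opn (U n)) -> (forall x, exists n, U n x) ->
    exists N, forall x, exists n, n <= N /\ U n x.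

Definition jointly_continuous (S : Type) (opn : (S -> Prop) -> Prop)
  (mul : S -> S -> S) : Prop :=
  forall W, opn W -> prod_open opn opn (fun p => W (mul (fst p) (snd p))).

Definition associative (S : Type) (mul : S -> S -> S) : Prop :=
  forall x y z, mul x (mul y z) = mul (mul x y) z.

(* The semigroup B_omega of omega x omega matrix units: None is the zero,
   Some (a, b) is the matrix unit (a, b), a b : nat. *)
Definition Bomega : Type := option (nat * nat).

Definition Bmul (u v : Bomega) : Bomega :=
  match u, v with
  | Some (a, b), Some (c, d) => if Nat.eqb b c then Some (a, d) else None
  | _, _ => None
  end.

(* An injective semigroup homomorphism B_omega -> S; its image is exactly a
   subsemigroup of S isomorphic to B_omega, and conversely. *)
Definition semigroup_embedding (S : Type) (mul : S -> S -> S)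
  (f : Bomega -> S) : Prop :=
  (forall u v, f u = f v -> u = v) /\
  (forall u v, f (Bmul u v) = mul (f u) (f v)).

(* Main.v *)
Require Import Defs.
From Stdlib Require Import Arith Lia Classical.

Theorem theorem3 (S : Type) (opn : (S -> Prop) -> Prop) (mul : S -> S -> S)
  (Htop : is_topology opn) (Hhaus : hausdorff opn)
  (Hassoc : associative mul) (Hcont : jointly_continuous opn mul)
  (Hcc : countably_compact (prod_open opn opn)) :
  ~ (exists f : Bomega -> S, semigroup_embedding mul f).
Proof.
  intros [f [Hinj Hhom]].
  set (p := fun n : nat => (f (Some (0, n)), f (Some (n, 0)))).
  assert (Hacc : exists q : S * S, forall W, prod_open opn opn W -> W q ->
            forall N, exists n, N <= n /\ W (p n)).
  { apply NNPP; intro Hno.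
    set (U := fun N q => exists W, prod_open opn opn W /\ W q /\
                 forall n, W (p n) -> n < N).
    destruct (Hcc U) as [N HN].
    - intros N q [W [HW [Wq Wp]]].
      destruct (HW q Wq) as [A [B [HA [HB [Aq [Bq Hab]]]]]].
      exists A, B; repeat split; auto.
      intros x y Ax By. exists W; repeat split; auto.
    - intros q.
      destruct (classic (exists W, prod_open opn opn W /\ W q /\
                 exists N, forall n, W (p n) -> n < N)) as [[W [HW [Wq [N HN]]]]|Hn].
      + exists N, W; auto.
      + exfalso; apply Hno; exists q. intros W HW Wq N.
        apply NNPP; intro Hc. apply Hn. exists W; repeat split; auto.
        exists N; intros n Wn. apply NNPP; intro Hl. apply Hc; exists n; split; [lia|auto].
    - destruct (HN (p (N + 1))) as [k [Hk [W [_ [Wp Hlt]]]]].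
      specialize (Hlt _ Wp). lia. }
  destruct Hacc as [[x y] Hq].
  assert (Hnb : forall W, opn W -> W (mul x y) -> W (f (Some (0,0))) /\ W (f None)).
  { intros W HW Wz.
    destruct (Hcont W HW (x, y) Wz) as [A [B [HA [HB [Ax [By Hab]]]]]].
    assert (Hbox : prod_open opn opn (fun q => A (fst q) /\ B (snd q))).
    { intros q [Aq Bq]. exists A, B; repeat split; auto. }
    destruct (Hq _ Hbox (conj Ax By) 0) as [n [_ [An Bn]]].
    destruct (Hq _ Hbox (conj Ax By) (n + 1)) as [m [Hm [Am Bm]]].
    simpl in *. split.
    - specialize (Hab _ _ An Bn). simpl in Hab.
      rewrite <- Hhom in Hab. simpl in Hab. rewrite Nat.eqb_refl in Hab. exact Hab.
    - specialize (Hab _ _ An Bm). simpl in Hab.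
      rewrite <- Hhom in Hab. simpl in Hab.
      replace (Nat.eqb n m) with false in Hab by (symmetry; apply Nat.eqb_neq; lia).
      exact Hab. }
  assert (Hne : f (Some (0,0)) <> f None) by (intro H; discriminate (Hinj _ _ H)).
  destruct (classic (mul x y = f (Some (0,0)))) as [Heq|Hneq].
  - rewrite <- Heq in Hne.
    destruct (Hhaus _ _ Hne) as [A [B [HA [HB [Az [Bn Hd]]]]]].
    apply (Hd (f None)); [apply (Hnb A HA Az)|exact Bn].
  - destruct (Hhaus _ _ Hneq) as [A [B [HA [HB [Az [Bn Hd]]]]]].
    apply (Hd (f (Some (0,0)))); [apply (Hnb A HA Az)|exact Bn].
Qed.
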